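(* Assume $\bar\Phi_p=0$, $\Phi_p^\top\Phi_p=\mathrm{diag}(\sigma_1^2,\dots,\sigma_d^2)$ with all $\sigma_j^2>0$, $\delta>0$, $\lambda\ge0$, and that every entry of $\hat\beta_{\mathrm{ols}}$ is nonzero. Let $\hat\beta^\lambda_{\mathrm{lasso}}$ be the (unique) minimizer of $\|Y_p-\Phi_p\beta\|_2^2+\lambda\|\beta\|_1$ and $I_\lambda:=\{j:\hat\beta^\lambda_{\mathrm{lasso},j}\neq0\}$. Let $\hat\Phi_q^\delta:=\mathcal T_\delta(\bar\Phi_q-\bar\Phi_p)$ be the reweighted features of the $\ell_\infty$ balancing weights with parameter $\delta$, and $I_\delta:=\{j:\hat\Phi^\delta_{q,j}\neq0\}$. Let $\hat\beta_{\ell_\infty}$ be the augmented coefficients obtained with $\hat\beta_{\mathrm{reg}}=\hat\beta^\lambda_{\mathrm{lasso}}$, i.e. with $\Delta_j:=\bar\Phi_{q,j}-\bar\Phi_{p,j}$, $\hat\beta_{\ell_\infty,j}=\hat\beta^\lambda_{\mathrm{lasso},j}$ if $|\Delta_j|<\delta$ and $\hat\beta_{\ell_\infty,j}=|\delta/\Delta_j|\hat\beta^\lambda_{\mathrm{lasso},j}+(1-|\delta/\Delta_j|)\hat\beta_{\mathrm{ols},j}$ otherwise. Then $$\{j:\hat\beta_{\ell_\infty,j}\neq0\}=I_\lambda\cup I_\delta.$$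
   Context: $\Phi_p\in\mathbb{R}^{n\times d}$, $Y_p\in\mathbb{R}^n$, $\Phi_q\in\mathbb{R}^{n\times d}$, column averages $\bar\Phi_p,\bar\Phi_q$. $\hat\beta_{\mathrm{ols}}:=(\Phi_p^\top\Phi_p)^{-1}\Phi_p^\top Y_p$. $\mathcal T_t$ is entrywise soft-thresholding: $\mathcal T_t(z)=0$ if $|z|\le t$, $z-t$ if $z>t$, $z+t$ if $z<-t$. By the preceding result, $\bar\Phi_q\hat\beta_{\ell_\infty}$ equals the lasso outcome model augmented with $\ell_\infty$ balancing weights. *)

(* Defs.v *)
From HB Require Import structures.
From mathcomp Require Import all_boot all_order all_algebra.
From mathcomp Require Import reals.
Set Implicit Arguments. Unset Strict Implicit. Unset Printing Implicit Defensive.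
Import Order.TTheory GRing.Theory Num.Theory.
Local Open Scope ring_scope.

Section Defs.
Variable R : realType.

Definition colmean n d (Phi : 'M[R]_(n, d)) : 'rV[R]_d :=
  \row_j ((n%:R)^-1 * \sum_(i < n) Phi i j).

Definition beta_ols n d (Phi : 'M[R]_(n, d)) (Y : 'cV[R]_n) : 'cV[R]_d :=
  invmx (Phi^T *m Phi) *m Phi^T *m Y.

Definition soft_thr (t z : R) : R :=
  if `|z| <= t then 0 else if 0 < z then z - t else z + t.

Definition lasso_obj n d (Phi : 'M[R]_(n, d)) (Y : 'cV[R]_n) (lam : R)
  (b : 'cV[R]_d) : R :=
  \sum_(i < n) ((Y - Phi *m b) i 0) ^+ 2 + lam * \sum_(j < d) `|b j 0|.

Definition beta_linf d (Delta : 'rV[R]_d) (delta : R) (breg bols : 'cV[R]_d)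
  : 'cV[R]_d :=
  \col_j (if `|Delta 0 j| < delta then breg j 0
          else `|delta / Delta 0 j| * breg j 0
               + (1 - `|delta / Delta 0 j|) * bols j 0).

End Defs.

(* Main.v *)
Require Import Defs.
From HB Require Import structures.
From mathcomp Require Import all_boot all_order all_algebra.
From mathcomp Require Import reals.
From mathcomp Require Import ring lra.
Import Order.TTheory GRing.Theory Num.Theory.
Local Open Scope ring_scope.

Lemma key (R : realType) (n d : nat)
  (Phip : 'M[R]_(n, d)) (Yp : 'cV[R]_n)
  (sigma2 : 'rV[R]_d) (lam : R) (blasso : 'cV[R]_d) (j : 'I_d) :
  Phip^T *m Phip = diag_mx sigma2 ->
  (forall j, 0 < sigma2 0 j) -> 0 <= lam ->
  (forall b : 'cV[R]_d, lasso_obj Phip Yp lam blasso <= lasso_obj Phip Yp lam b) ->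
  0 <= blasso j 0 * (Phip^T *m Yp) j 0.
Proof.
move=> hD hs hl hmin.
set b := blasso j 0; set g := (Phip^T *m Yp) j 0.
set b' := blasso - b *: delta_mx j 0.
have := hmin b'.
rewrite /lasso_obj.
set r := Yp - Phip *m blasso.
have Er : Yp - Phip *m b' = r + b *: col j Phip.
  by rewrite /b' mulmxBr -scalemxAr -colE /r opprD opprK addrA.
have Hrc : \sum_(i < n) r i 0 * Phip i j = g - sigma2 0 j * b.
  have : (Phip^T *m r) j 0 = g - sigma2 0 j * b.
    by rewrite /r mulmxBr mulmxA hD mul_diag_mx !mxE /g mxE.
  move=> H; rewrite -H mxE; apply: eq_bigr => i _; rewrite [Phip^T _ _]mxE mulrC.
  done.
have Hcc : \sum_(i < n) Phip i j ^+ 2 = sigma2 0 j.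
  have : (Phip^T *m Phip) j j = sigma2 0 j by rewrite hD mxE eqxx mulr1n.
  move=> H; rewrite -H mxE; apply: eq_bigr => i _; rewrite mxE expr2.
  done.
have ES : \sum_(i < n) ((Yp - Phip *m b') i 0) ^+ 2 =
   \sum_(i < n) (r i 0) ^+ 2 + 2 * b * (g - sigma2 0 j * b)
     + b ^+ 2 * sigma2 0 j.
  rewrite Er -Hrc -Hcc mulr_sumr mulr_sumr -!big_split /=.
  apply: eq_bigr => i _; rewrite !mxE; ring.
have EL : \sum_(k < d) `|b' k 0| = \sum_(k < d) `|blasso k 0| - `|b|.
  rewrite [X in _ = X - _](bigD1 j) //= [LHS](bigD1 j) //= /b' !mxE eqxx /= mulr1 subrr
    normr0 add0r.
  rewrite addrAC subrr add0r; apply: eq_bigr => k hk.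
  by rewrite !mxE (negbTE hk) /= mulr0 subr0.
rewrite ES EL => H.
have hsj := hs j.
have hb : 0 <= `|b| by [].
have : 2 * b * g >= sigma2 0 j * b ^+ 2 + lam * `|b| by nra.
have : 0 <= lam * `|b| by rewrite mulr_ge0.
nra.
Qed.

Lemma soft_nz (R : realType) (t z : R) : 0 < t -> (soft_thr t z != 0) = (t < `|z|).
Proof.
move=> ht; rewrite /soft_thr; have [h|h] := leP `|z| t; first by rewrite ?eqxx.
have [hz|hz] := ltP 0 z.
- by rewrite subr_eq0; apply/negP => /eqP E; move: h; rewrite E gtr0_norm // ltxx.
- rewrite addr_eq0; apply/negP => /eqP E; move: h; rewrite E ler0_norm ?opprK ?ltxx //.
  by rewrite oppr_le0 ltW.
Qed.

Theorem mainTheorem8 (R : realType) (n d : nat)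
  (Phip : 'M[R]_(n, d)) (Yp : 'cV[R]_n) (Phiq : 'M[R]_(n, d))
  (sigma2 : 'rV[R]_d) (delta lam : R) (blasso : 'cV[R]_d) :
  colmean Phip = 0 ->
  Phip^T *m Phip = diag_mx sigma2 ->
  (forall j, 0 < sigma2 0 j) ->
  0 < delta -> 0 <= lam ->
  (forall j, beta_ols Phip Yp j 0 != 0) ->
  (forall b : 'cV[R]_d, lasso_obj Phip Yp lam blasso <= lasso_obj Phip Yp lam b) ->
  let Delta := colmean Phiq - colmean Phip in
  [set j | beta_linf Delta delta blasso (beta_ols Phip Yp) j 0 != 0]
  = [set j | blasso j 0 != 0] :|: [set j | soft_thr delta (Delta 0 j) != 0].
Proof.
move=> _ hD hs hdel hl hols hmin Delta.
have hunit : diag_mx sigma2 \in unitmx.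
  rewrite unitmxE det_diag unitfE; apply/prodf_neq0 => i _.
  by rewrite gt_eqF.
have hg : diag_mx sigma2 *m beta_ols Phip Yp = Phip^T *m Yp.
  by rewrite /beta_ols hD -!mulmxA mulKVmx.
apply/setP => j; rewrite !inE soft_nz // /beta_linf mxE.
have hk := @key R n d Phip Yp sigma2 lam blasso j hD hs hl hmin.
have hgj : (Phip^T *m Yp) j 0 = sigma2 0 j * beta_ols Phip Yp j 0.
  by rewrite -hg mul_diag_mx mxE.
rewrite hgj in hk.
have hsj := hs j.
have hoj := hols j.
set b := blasso j 0 in hk *; set o := beta_ols Phip Yp j 0 in hk hoj *.
set D := Delta 0 j.
have hbo : 0 <= b * o.
  have : 0 <= sigma2 0 j * (b * o) by rewrite mulrCA.
  by rewrite pmulr_rge0.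
case: ltP => h1.
  by rewrite ltNge (ltW h1) orbF.
have hD0 : D != 0 by apply/eqP => E; move: h1; rewrite E normr0; rewrite leNgt hdel.
have ha : `|delta / D| = delta / `|D| by rewrite normrM normfV gtr0_norm.
rewrite ha.
case: (eqVneq `|D| delta) => hE.
  rewrite hE divff; last by rewrite gt_eqF.
  by rewrite mul1r subrr mul0r addr0 ltxx orbF.
have hlt : delta < `|D| by rewrite lt_neqAle eq_sym hE h1.
rewrite hlt orbT.
have hDp : 0 < `|D| by apply: lt_trans hdel hlt.
have a0 : 0 < delta / `|D| by rewrite divr_gt0.
have a1 : delta / `|D| < 1 by rewrite ltr_pdivrMr // mul1r.
set a := delta / `|D| in a0 a1 *.
have ho2 : 0 < o * o.
  by rewrite -expr2 exprn_even_gt0.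
apply/eqP => E.
have : (a * b + (1 - a) * o) * o = 0 by rewrite E mul0r.
nra.
Qed.
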